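(* Let $\mathcal{R}$ be a cell space, let $A\subseteq M$, and let $E,E'\subseteq G/G_0$ satisfy $\{g^{-1}\cdot e': e,e'\in E,\ g\in e\}\subseteq E'$. Then for every $m\in M$ we have $m\triangleleft E\subseteq M\setminus A$ or $m\triangleleft E\subseteq A^{+E'}$.
   Context: A cell space $\mathcal{R}$ consists of a group $G$ acting transitively on the left on a nonempty set $M$ via $\triangleright$, a point $m_0\in M$ and a family $(g_{m_0,m})_{m\in M}$ in $G$ with $g_{m_0,m}\triangleright m_0=m$. $G_0$ is the stabiliser of $m_0$, $G/G_0$ the set of left cosets (elements are subsets of $G$), with $G$ acting by $g\cdot hG_0=ghG_0$. The right semi-action $\triangleleft\colon M\times G/G_0\to M$ is $m\triangleleft gG_0=g_{m_0,m}g\triangleright m_0$; $m\triangleleft E=\{m\triangleleft e:e\in E\}$. For $A\subseteq M$, $A^{+E'}=\{m\in M:(m\triangleleft E')\cap A\neq\emptyset\}$. *)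

(* Defs.v *)
Record CellSpace := {
  G : Type;
  M : Type;
  mul : G -> G -> G;
  one : G;
  inv : G -> G;
  mulA : forall x y z, mul x (mul y z) = mul (mul x y) z;
  mul1g : forall x, mul one x = x;
  mulg1 : forall x, mul x one = x;
  mulVg : forall x, mul (inv x) x = one;
  mulgV : forall x, mul x (inv x) = one;
  act : G -> M -> M;
  act1 : forall m, act one m = m;
  actM : forall g h m, act (mul g h) m = act g (act h m);
  act_transitive : forall m m', exists g, act g m = m';
  m0 : M;
  gm : M -> G;   (* m |-> g_{m0,m} *)
  gmP : forall m, act (gm m) m0 = m
}.

Section Defs.
Variable R : CellSpace.

Definition G0 : G R -> Prop := fun h => act R h (m0 R) = m0 R.

Definition coset (g : G R) : G R -> Prop :=
  fun x => exists h, G0 h /\ x = mul R g h.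

Definition is_coset (C : G R -> Prop) : Prop := exists g, C = coset g.

Definition cact (g : G R) (C : G R -> Prop) : G R -> Prop :=
  fun x => exists y, C y /\ x = mul R g y.

(** m <| E = { m <| e : e in E }, where m <| gG_0 = g_{m0,m} g |> m0
    (computed via any representative g of the coset e). *)
Definition semiset (m : M R) (E : (G R -> Prop) -> Prop) : M R -> Prop :=
  fun m' => exists e, E e /\ exists g, e g /\ m' = act R (mul R (gm R m) g) (m0 R).

Definition plus (A : M R -> Prop) (E' : (G R -> Prop) -> Prop) : M R -> Prop :=
  fun m => exists m', semiset m E' m' /\ A m'.

End Defs.

(* Main.v *)
Require Import Defs.
From Stdlib Require Import Classical.

Theorem lemmaX (R : CellSpace) (A : M R -> Prop)
    (E E' : (G R -> Prop) -> Prop)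
    (HE : forall e, E e -> is_coset R e)
    (HE' : forall e, E' e -> is_coset R e)
    (Hsub : forall e e' g, E e -> E e' -> e g -> E' (cact R (inv R g) e')) :
  forall m : M R,
    (forall m', semiset R m E m' -> ~ A m') \/
    (forall m', semiset R m E m' -> plus R A E' m').
Proof.
  intros m.
  destruct (classic (exists m', semiset R m E m' /\ A m')) as [[m1 [[e1 [He1 [g1 [Hg1 Hm1]]]] HA]]|Hn].
  2:{ left. intros m' Hs HA. apply Hn. eauto. }
  right. intros m2 [e2 [He2 [g2 [Hg2 Hm2]]]].
  set (h := mul R (inv R (mul R (gm R m) g2)) (gm R m2)).
  assert (Hh : G0 R h).
  { unfold G0, h. rewrite actM, gmP, Hm2, <- actM, mulVg. apply act1. }
  assert (Hgm2 : gm R m2 = mul R (mul R (gm R m) g2) h).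
  { unfold h. rewrite mulA, mulgV, mul1g. reflexivity. }
  set (g2' := mul R g2 h).
  assert (Hg2' : e2 g2').
  { destruct (HE e2 He2) as [c Hc]. rewrite Hc in Hg2 |- *.
    destruct Hg2 as [k [Hk ->]]. exists (mul R k h). split.
    - unfold G0 in *. rewrite actM, Hh. exact Hk.
    - unfold g2'. rewrite mulA. reflexivity. }
  exists m1. split; [|exact HA].
  exists (cact R (inv R g2') e1). split; [apply (Hsub e2 e1 g2'); auto|].
  exists (mul R (inv R g2') g1). split; [exists g1; split; auto|].
  rewrite Hm1, Hgm2. f_equal. fold g2'.
  rewrite <- (mulA R (gm R m) g2 h). fold g2'.
  rewrite (mulA R (mul R (gm R m) g2') (inv R g2') g1).
  rewrite <- (mulA R (gm R m) g2' (inv R g2')), mulgV, mulg1. reflexivity.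
Qed.
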